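(* Let $u=s_{i_1}\cdots s_{i_l}$ and $v=s_{j_1}\cdots s_{j_m}$ be reduced words for glides in $\hat S_n$ with offsets $k_1,k_2$, with $vu$ reduced, and let $\tilde v=\rho^{-k_2}(v)$ (with reduced word $s_{j_1-k_2}\cdots s_{j_m-k_2}$). Let $\Gamma$ be the (lifted, wire-labelled) wiring diagram of the bi-infinite word $\cdots\rho^{2k_1}(u)\rho^{k_1}(u)\,u\,\rho^{-k_1}(u)\cdots$, in which the $j$-th crossing of the copy $\rho^{-ik_1}(u)$ is called vertex $(j,i)$, and let $\Gamma'$ be the diagram obtained after $m\ge0$ steps of the time evolution, in which the $j$-th crossing of the $i$-th copy of a rotation of $u$ is again called vertex $(j,i)$. Then for every $i\in\mathbb Z$ there is an isomorphism of the (unweighted) cylindric wiring diagrams $\Gamma\to\Gamma'$ sending vertex $(j,i_0)$ to vertex $(j,i_0+i)$ for all $j,i_0$, and if a chamber of $\Gamma$ has label $\mathbf s$ then the corresponding chamber of $\Gamma'$ has label $$\mathbf s'=\mathbf s+i\,t(u)-m\,t(\tilde v)$$ (as elements of $\mathbb Z^n/\mathbb Z(1,\dots,1)$).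
   Context: $\hat S_n$: generators $s_0,\dots,s_{n-1}$ (indices mod $n$), relations $s_i^2=1$, $s_is_js_i=s_js_is_j$ if $i-j\equiv\pm1$, $s_is_j=s_js_i$ if $i-j\not\equiv0,\pm1$. $\rho$ is the automorphism $s_i\mapsto s_{i+1}$; $\phi:\hat S_n\to S_n$, $s_i\mapsto(i\ i+1)$, $s_0\mapsto(1\ n)$; a glide of offset $k\in\{0,\dots,n-1\}$ is $g$ with $\phi(g)(j)\equiv j+k\pmod n$; for glides $u,v$ of offsets $k_1,k_2$, $vu=\rho^{k_2}(u)\rho^{-k_1}(v)$. Wiring diagrams: a word is drawn left to right on a cylinder with wires in positions $1,\dots,n$ (mod $n$), $s_i$ crossing positions $i,i+1$. Universal cover: positions become integers (position $p$ lying over $p \bmod n$), each crossing $s_i$ lifting to crossings of positions $p,p+1$ for all $p\equiv i$; lifted wires are labelled by integers according to their positions at a fixed vertical line, and these labels are carried along unchanged by braid and commutation moves. A chamber is a connected region of the complement of the lifted wires; if $S\subseteq\mathbb Z$ is the set of labels of wires passing below it, its label is $[S]=(\mathbf s_1,\dots,\mathbf s_n)$ with $\mathbf s_i=\lceil \max\{b\in S:b\equiv i\bmod n\}/n\rceil$. Trajectory: for a glide $g$ with a reduced word, draw the diagram of the word with lifted wires labelled by their starting positions (left end); $t(g)$ is the label of the chamber directly above the wire labelled $1$ at the right end minus the label of the chamber directly above wire $1$ at the left end, an element of $\mathbb Z^n/\mathbb Z(1,\dots,1)$. Time evolution: starting from $\Gamma$, one time step inserts a rotation $\rho^{Ik_1}(v)$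 immediately to the left of the copy $\rho^{Ik_1}(u)$ far to the left and pushes it to the right through all copies using $\rho^{ik_1}(v)\rho^{ik_1}(u)=\rho^{ik_1+k_2}(u)\rho^{(i-1)k_1}(v)$ (realized by braid and commutation moves); the result is the bi-infinite word in which the $i$-th copy is $\rho^{-ik_1+k_2}(u)$. After $m$ steps the $i$-th copy is $\rho^{-ik_1+mk_2}(u)$. *)

(* Defs.v *)
From Stdlib Require Import ZArith List Lia.
Import ListNotations.
Open Scope Z_scope.

(** Affine symmetric group hat S_n, realized (faithfully) as the group of
    affine permutations of Z.  A letter [a : Z] stands for the generator
    s_(a mod n). *)
Definition sigma (n a p : Z) : Z :=
  if (p - a) mod n =? 0 then p + 1
  else if (p - a - 1) mod n =? 0 then p - 1 else p.

Definition word_perm (n : Z) (w : list Z) : Z -> Z :=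
  fold_right (fun a f p => sigma n a (f p)) (fun p => p) w.

Definition reduced (n : Z) (w : list Z) : Prop :=
  forall w' : list Z, (forall p, word_perm n w' p = word_perm n w p) ->
    (length w <= length w')%nat.

Definition glide (n : Z) (w : list Z) (k : Z) : Prop :=
  0 <= k < n /\ forall j : Z, (word_perm n w j - j - k) mod n = 0.

Definition rot (c : Z) (w : list Z) : list Z := map (fun a => a + c) w.

Definition ceil_div (M n : Z) : Z := - ((- M) / n).

(** Set of labels of the wires lying weakly below lifted position p on a
    vertical line whose position->label map is L. *)
Definition below (L : Z -> Z) (p : Z) : Z -> Prop :=
  fun b => exists q, q <= p /\ L q = b.

Definition IsLabel (n : Z) (S : Z -> Prop) (s : Z -> Z) : Prop :=
  forall a, 1 <= a <= n ->
    exists M, S M /\ (M - a) mod n = 0 /\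
      (forall b, S b -> (b - a) mod n = 0 -> b <= M) /\
      s a = ceil_div M n.

(** Trajectory t(g) of a word g (representative in Z^n; only entries 1..n
    matter): wires labelled by starting positions, so the line at the left
    end is the identity and at the right end is [word_perm n g]; wire 1 sits
    at position 1 on the left and at position p1 with (word_perm n g p1 = 1)
    on the right; the chamber directly above it is the gap between p1, p1+1. *)
Definition trajectory (n : Z) (g : list Z) (tg : Z -> Z) : Prop :=
  exists p1 sL sR,
    word_perm n g p1 = 1 /\
    IsLabel n (below (fun q => q) 1) sL /\
    IsLabel n (below (word_perm n g) p1) sR /\
    forall a, tg a = sR a - sL a.

(** The bi-infinite word after s steps of time evolution:
    the letter at time t (crossing between vertical lines t and t+1) is the
    ((t mod l)+1)-th letter of the copy number (t / l), and copy number i is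
    rho^(-i k1 + s k2)(u).  (s = 0 gives Gamma: ... rho^(k1)(u) u rho^(-k1)(u) ...,
    copy 0 = u occupying times 0..l-1.)  [None] = no crossing (only if u = []). *)
Definition gamma_word (u : list Z) (k1 k2 : Z) (s : nat) (t : Z) : option Z :=
  let l := Z.of_nat (length u) in
  if l =? 0 then None
  else Some (nth (Z.to_nat (t mod l)) u 0 - (t / l) * k1 + Z.of_nat s * k2).

Definition seg (w : Z -> option Z) (t T : Z) : list Z :=
  flat_map (fun k => match w (t + Z.of_nat k) with Some a => [a] | None => [] end)
           (seq 0 (Z.to_nat (T - t))).

(** Labelled lifted wiring diagrams along the time evolution.
    [L s t] is the position -> wire-label map on vertical line t (just left
    of the crossing at time t) of the diagram after s steps.
    - Gamma (s = 0) is labelled by the positions on the vertical line 0,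
      i.e. immediately to the left of the copy u.
    - Each [L s] is consistent with the word [gamma_word u k1 k2 s].
    - Time step s -> s+1: the rotation of v is inserted far to the left
      (without changing labels near the finite part of the diagram) and
      pushed to the right through the copies by braid and commutation moves,
      which carry wire labels along and hence do not change labels on the
      vertical lines bounding the modified block.  After it has passed copy
      J >= 0 (so it is rho^(-(J+1)k1 + s k2)(v), located between times
      (J+1)l-1 and (J+1)l of the old diagram), the diagram is: the new word
      on times < (J+1)l, then that rotation of v, then the old diagram; the
      labels right of v are the old ones.  Labels on line t <= (J+1)l of the
      new diagram are obtained from those. *)
Definition evolution (n : Z) (u v : list Z) (k1 k2 : Z)
    (L : nat -> Z -> Z -> Z) : Prop :=
  let l := Z.of_nat (length u) in
  (forall q, L O 0 q = q) /\
  (forall s t q, L s (t + 1) q =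
     match gamma_word u k1 k2 s t with
     | Some a => L s t (sigma n a q)
     | None => L s t q
     end) /\
  (forall (s : nat) (J t q : Z), 0 <= J -> t <= (J + 1) * l ->
     L (S s) t
       (word_perm n (seg (gamma_word u k1 k2 (S s)) t ((J + 1) * l)
                     ++ rot (- (J + 1) * k1 + Z.of_nat s * k2) v) q)
     = L s ((J + 1) * l) q).

(** Isomorphism of the cylindric (unlabelled) wiring diagrams given by
    rotating the cylinder by r and sending the crossing at time t of the
    first word to the crossing at time t + d of the second. *)
Definition cyl_iso (n r d : Z) (w w' : Z -> option Z) : Prop :=
  forall t, match w t, w' (t + d) with
            | Some a, Some b => (b - a - r) mod n = 0
            | None, None => True
            | _, _ => False
            end.

(* Main.v *)
Require Import Defs.
From Stdlib Require Import ZArith List Lia.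
Import ListNotations.
Open Scope Z_scope.

Definition st (n : Z) (o : option Z) : Z -> Z :=
  match o with Some a => sigma n a | None => fun q => q end.

Definition CT (n : Z) (G e : Z -> Z) : Prop :=
  (forall x, G x = x + n * e x) /\ (forall x y, (x - y) mod n = 0 -> e x = e y).

Lemma mod0_ex n x : n <> 0 -> x mod n = 0 -> x = n * (x / n).
Proof. intros Hn H. pose proof (Z.div_mod x n Hn). lia. Qed.

Lemma mod_shift0 n x c : x mod n = 0 -> (x + c) mod n = c mod n.
Proof.
  intros H. destruct (Z.eq_dec n 0) as [->|Hn].
  - rewrite Zmod_0_r in *. subst. rewrite Zmod_0_r. lia.
  - rewrite (mod0_ex n x Hn H). replace (n * (x / n) + c) with (c + (x/n) * n) by ring.
    apply Z_mod_plus_full.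
Qed.

Lemma sigma_shift n a r q : sigma n (a + r) (q + r) = sigma n a q + r.
Proof.
  unfold sigma. replace (q + r - (a + r)) with (q - a) by ring.
  replace (q + r - (a + r) - 1) with (q - a - 1) by ring.
  destruct ((q - a) mod n =? 0); [ring|]. destruct ((q - a - 1) mod n =? 0); ring.
Qed.

Lemma sigma_per n a p c : sigma n a (p + n * c) = sigma n a p + n * c.
Proof.
  unfold sigma. replace (p + n * c - a) with ((p - a) + c * n) by ring.
  replace ((p - a) + c * n - 1) with ((p - a - 1) + c * n) by ring.
  rewrite !Z_mod_plus_full.
  destruct ((p - a) mod n =? 0); [ring|]. destruct ((p - a - 1) mod n =? 0); ring.
Qed.

Lemma sigma_invol n a p : 2 <= n -> sigma n a (sigma n a p) = p.
Proof.
  intros Hn. assert (H1 : 1 mod n = 1) by (apply Z.mod_small; lia).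
  unfold sigma at 2.
  destruct ((p - a) mod n =? 0) eqn:E1.
  - apply Z.eqb_eq in E1. unfold sigma.
    replace (p + 1 - a) with ((p - a) + 1) by ring. rewrite (mod_shift0 _ _ _ E1), H1. simpl.
    replace (p - a + 1 - 1) with (p - a) by ring. rewrite E1. simpl. ring.
  - destruct ((p - a - 1) mod n =? 0) eqn:E2.
    + apply Z.eqb_eq in E2. unfold sigma.
      replace (p - 1 - a) with (p - a - 1) by ring. rewrite E2. simpl. ring.
    + unfold sigma. rewrite E1, E2. reflexivity.
Qed.

Lemma st_shift n o r q : st n (option_map (fun a => a + r) o) (q + r) = st n o q + r.
Proof. destruct o; simpl; [apply sigma_shift|reflexivity]. Qed.

Lemma st_invol n o q : 2 <= n -> st n o (st n o q) = q.
Proof. intros; destruct o; simpl; [apply sigma_invol; auto|reflexivity]. Qed.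

Lemma wp_cons n a w p : word_perm n (a :: w) p = sigma n a (word_perm n w p).
Proof. reflexivity. Qed.

Lemma wp_rot n c w q : word_perm n (rot c w) q = word_perm n w (q - c) + c.
Proof.
  induction w as [|a w IH]; simpl.
  - ring.
  - change (sigma n (a + c) (word_perm n (rot c w) q) = sigma n a (word_perm n w (q - c)) + c).
    rewrite IH. apply sigma_shift.
Qed.

Lemma wp_per n w p c : word_perm n w (p + n * c) = word_perm n w p + n * c.
Proof.
  induction w as [|a w IH]; [reflexivity|].
  rewrite !wp_cons, IH. apply sigma_per.
Qed.

Lemma wp_run n (w : list Z) : forall (B : Z -> Z -> Z) t0,
  (forall k, (k < length w)%nat -> forall q,
      B (t0 + Z.of_nat k + 1) q = B (t0 + Z.of_nat k) (sigma n (nth k w 0) q)) ->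
  forall q, B (t0 + Z.of_nat (length w)) q = B t0 (word_perm n w q).
Proof.
  induction w as [|a w IH]; intros B t0 H q.
  - simpl. rewrite Z.add_0_r. reflexivity.
  - rewrite wp_cons.
    replace (t0 + Z.of_nat (length (a :: w))) with ((t0 + 1) + Z.of_nat (length w))
      by (simpl length; lia).
    rewrite (IH B (t0 + 1)).
    + specialize (H 0%nat ltac:(simpl; lia)). simpl in H.
      rewrite Z.add_0_r in H. apply H.
    + intros k Hk q'. specialize (H (S k) ltac:(simpl; lia)). simpl nth in H.
      replace (t0 + 1 + Z.of_nat k + 1) with (t0 + Z.of_nat (S k) + 1) by lia.
      replace (t0 + 1 + Z.of_nat k) with (t0 + Z.of_nat (S k)) by lia.
      apply H.
Qed.

Lemma shift_lemma n (Hn : 2 <= n) (A B : Z -> Z -> Z) (o o' : Z -> option Z) (r t0 : Z)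
  (F : Z -> Z) :
  (forall t q, A (t+1) q = A t (st n (o t) q)) ->
  (forall t q, B (t+1) q = B t (st n (o' t) q)) ->
  (forall t, o' t = option_map (fun a => a + r) (o t)) ->
  (forall q, B t0 (q + r) = F (A t0 q)) ->
  forall t q, B t (q + r) = F (A t q).
Proof.
  intros hA hB ho h0.
  assert (fw : forall t, (forall q, B t (q + r) = F (A t q)) ->
                    forall q, B (t + 1) (q + r) = F (A (t + 1) q)).
  { intros t H q. rewrite hB, ho, st_shift, H, hA. reflexivity. }
  assert (bw : forall t, (forall q, B (t + 1) (q + r) = F (A (t + 1) q)) ->
                    forall q, B t (q + r) = F (A t q)).
  { intros t H q.
    rewrite <- (st_invol n (o' t) (q + r) Hn). rewrite <- hB.
    rewrite ho, st_shift, H, hA, st_invol; auto. }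
  intros t. replace t with (t0 + (t - t0)) by ring.
  generalize (t - t0). intro z. pattern z. apply Z.peano_ind.
  - rewrite Z.add_0_r. exact h0.
  - intros x Hx. unfold Z.succ. rewrite Z.add_assoc. apply fw. exact Hx.
  - intros x Hx. apply bw. unfold Z.pred. replace (t0 + (x + -1) + 1) with (t0 + x) by ring.
    exact Hx.
Qed.

Lemma label_img n (Hn : 2 <= n) G e (S S' : Z -> Prop) s : CT n G e ->
  (forall b, S b -> S' (G b)) -> (forall b, S' b -> exists b0, S b0 /\ b = G b0) ->
  IsLabel n S s -> IsLabel n S' (fun a => s a + e a).
Proof.
  intros [HG He] H1 H2 HL a Ha. destruct (HL a Ha) as [M [HSM [HMa [Hmax Hs]]]].
  exists (G M). split; [auto|].
  assert (HeM: e M = e a) by (apply He; exact HMa).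
  rewrite HG. split.
  - replace (M + n * e M - a) with ((M - a) + e M * n) by ring.
    rewrite Z_mod_plus_full; exact HMa.
  - split.
    + intros b Hb Hba. destruct (H2 b Hb) as [b0 [Hb0 ->]]. rewrite HG in *.
      replace (b0 + n * e b0 - a) with ((b0 - a) + e b0 * n) in Hba by ring.
      rewrite Z_mod_plus_full in Hba.
      pose proof (Hmax b0 Hb0 Hba). assert (e b0 = e a) by (apply He; exact Hba). lia.
    + rewrite Hs, HeM. unfold ceil_div.
      replace (-(M + n * e a)) with (-M + (-(e a)) * n) by ring.
      rewrite Z.div_add by lia. ring.
Qed.

Lemma label_uniq n S s s' : IsLabel n S s -> IsLabel n S s' ->
  forall a, 1 <= a <= n -> s a = s' a.
Proof.
  intros H H' a Ha. destruct (H a Ha) as [M [h1 [h2 [h3 h4]]]].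
  destruct (H' a Ha) as [M' [h1' [h2' [h3' h4']]]].
  assert (M = M') by (pose proof (h3 _ h1' h2'); pose proof (h3' _ h1 h2); lia).
  subst. congruence.
Qed.

Lemma CT_word n (Hn : 2 <= n) g k :
  (forall j, (word_perm n g j - j - k) mod n = 0) ->
  CT n (fun x => word_perm n g (x - k)) (fun x => (word_perm n g (x - k) - x) / n).
Proof.
  intros Hg. split.
  - intro x. pose proof (Hg (x - k)) as h.
    replace (word_perm n g (x - k) - (x - k) - k) with (word_perm n g (x - k) - x) in h by ring.
    pose proof (mod0_ex n _ ltac:(lia) h). lia.
  - intros x y Hxy. pose proof (mod0_ex n _ ltac:(lia) Hxy).
    replace (x - k) with ((y - k) + n * ((x - y) / n)) by lia.
    rewrite wp_per. f_equal. lia.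
Qed.

Lemma traj_lemma n (Hn : 2 <= n) g k tg :
  (forall j, (word_perm n g j - j - k) mod n = 0) -> trajectory n g tg ->
  exists c, forall a, 1 <= a <= n -> tg a = (word_perm n g (a - k) - a) / n + c.
Proof.
  intros Hg [p1 [sL [sR [Hp1 [HL [HR Ht]]]]]].
  pose proof (CT_word n Hn g k Hg) as HCT.
  set (e := fun x => (word_perm n g (x - k) - x) / n) in *.
  set (P := p1 + k).
  assert (HP : P = 1 - n * e P).
  { destruct HCT as [H _]. specialize (H P). simpl in H. unfold P in H at 1.
    replace (p1 + k - k) with p1 in H by ring. rewrite Hp1 in H. lia. }
  assert (CT1 : CT n (fun x => x + n * (- e P)) (fun _ => - e P)).
  { split; intros; reflexivity. }
  pose proof (label_img n Hn _ _ (below (fun q => q) 1) (below (fun q => q) P) sL CT1) as L1.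
  assert (L1' : IsLabel n (below (fun q => q) P) (fun a => sL a + - e P)).
  { apply L1; auto.
    - intros b [q [Hq <-]]. exists (q + n * - e P). split; [lia|reflexivity].
    - intros b [q [Hq <-]]. exists (q + n * e P). split.
      + exists (q + n * e P). split; [lia|reflexivity].
      + ring. }
  assert (L2 : IsLabel n (below (word_perm n g) p1) (fun a => (sL a + - e P) + e a)).
  { apply (label_img n Hn _ _ (below (fun q => q) P) _ _ HCT); auto.
    - intros b [q [Hq <-]]. exists (q - k). split; [unfold P in Hq; lia| reflexivity].
    - intros b [q [Hq <-]]. exists (q + k). split.
      + exists (q + k). split; [unfold P; lia|reflexivity].
      + f_equal. ring. }
  exists (- e P). intros a Ha. rewrite Ht.
  rewrite <- (label_uniq _ _ _ _ L2 HR a Ha). simpl. fold (e a). ring.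
Qed.

Lemma mod_mul0 n c : (n * c) mod n = 0.
Proof. replace (n * c) with (0 + c * n) by ring. rewrite Z_mod_plus_full. apply Zmod_0_l. Qed.

Lemma gamma_shift (u : list Z) k1 k2 s s' t c :
  gamma_word u k1 k2 s (t + c * Z.of_nat (length u)) =
  option_map (fun a => a + (- c * k1 + (Z.of_nat s - Z.of_nat s') * k2))
    (gamma_word u k1 k2 s' t).
Proof.
  unfold gamma_word; cbv zeta. destruct (Z.of_nat (length u) =? 0) eqn:E; [reflexivity|].
  apply Z.eqb_neq in E. simpl. f_equal.
  rewrite Z_mod_plus_full, Z.div_add by exact E. ring.
Qed.

Lemma seg_nil w t : seg w t t = [].
Proof. unfold seg. rewrite Z.sub_diag. reflexivity. Qed.

Theorem proposition5p4 (n : Z) (u v : list Z) (k1 k2 : Z) (m : nat) (i : Z)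
    (L : nat -> Z -> Z -> Z) (tu tv : Z -> Z) :
  2 <= n ->
  reduced n u -> reduced n v ->
  glide n u k1 -> glide n v k2 ->
  reduced n (v ++ u) ->
  trajectory n u tu ->
  trajectory n (rot (- k2) v) tv ->
  evolution n u v k1 k2 L ->
  exists r : Z,
    cyl_iso n r (i * Z.of_nat (length u))
      (gamma_word u k1 k2 O) (gamma_word u k1 k2 m) /\
    forall (t p : Z) (s s' : Z -> Z),
      IsLabel n (below (L O t) p) s ->
      IsLabel n (below (L m (t + i * Z.of_nat (length u))) (p + r)) s' ->
      exists c : Z, forall a, 1 <= a <= n ->
        s' a = s a + i * tu a - Z.of_nat m * tv a + c.
Proof.
  intros Hn _ _ [Hk1 Hgu] [Hk2 Hgv] _ Htu Htv [hL1 [hL2 hL3]].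
  exists (- i * k1 + Z.of_nat m * k2). split.
  { intro t. rewrite (gamma_shift u k1 k2 m O). destruct (gamma_word u k1 k2 O t); simpl; [|trivial].
    replace (z + (- i * k1 + (Z.of_nat m - 0) * k2) - z - (- i * k1 + Z.of_nat m * k2))
      with 0 by ring. reflexivity. }
  assert (hstep : forall s t q, L s (t+1) q = L s t (st n (gamma_word u k1 k2 s t) q)).
  { intros. rewrite hL2. destruct (gamma_word u k1 k2 s t); reflexivity. }
  assert (L0l : forall q, L O (Z.of_nat (length u)) q = word_perm n u q).
  { intro q. rewrite <- (hL1 (word_perm n u q)).
    rewrite <- (wp_run n u (L O) 0). { rewrite Z.add_0_l. reflexivity. }
    intros k Hk q'. rewrite hstep. f_equal.
    unfold gamma_word; cbv zeta.
    destruct (Z.of_nat (length u) =? 0) eqn:E; [apply Z.eqb_eq in E; lia|].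
    rewrite Z.add_0_l, Z.mod_small, Z.div_small by lia. rewrite Nat2Z.id. unfold st. simpl. rewrite Z.sub_0_r, Z.add_0_r. reflexivity. }
  pose proof (CT_word n Hn u k1 Hgu) as CTu.
  pose proof (traj_lemma n Hn u k1 tu Hgu Htu) as [c1 Hc1].
  set (e1 := fun x => (word_perm n u (x - k1) - x) / n) in *.
  assert (Hgv' : forall j, (word_perm n (rot (- k2) v) j - j - k2) mod n = 0).
  { intro j. rewrite wp_rot. replace (j - - k2) with (j + k2) by ring.
    replace (word_perm n v (j + k2) + - k2 - j - k2)
      with (word_perm n v (j + k2) - (j + k2) - k2) by ring. apply Hgv. }
  pose proof (CT_word n Hn _ k2 Hgv') as CTv.
  pose proof (traj_lemma n Hn _ k2 tv Hgv' Htv) as [c2 Hc2].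
  set (f := fun x => (word_perm n (rot (- k2) v) (x - k2) - x) / n) in *.
  assert (HY : forall x, word_perm n (rot (- k2) v) (x - k2) = word_perm n v x - k2).
  { intro x. rewrite wp_rot. replace (x - k2 - - k2) with x by ring. ring. }
  set (l := Z.of_nat (length u)) in *.
  assert (Hsl : forall t q, L O (t + l) (q + - k1) = word_perm n u (L O t q - k1)).
  { apply (shift_lemma n Hn (L O) (fun t => L O (t + l)) (gamma_word u k1 k2 O)
             (fun t => gamma_word u k1 k2 O (t + l)) (- k1) 0
             (fun x => word_perm n u (x - k1))).
    - apply hstep.
    - intros t q. replace (t + 1 + l) with ((t + l) + 1) by ring. apply hstep.
    - intro t. replace (t + l) with (t + 1 * l) by ring. unfold l. rewrite (gamma_shift u k1 k2 O O).
      destruct (gamma_word u k1 k2 O t); cbn [option_map]; [|reflexivity]. apply (f_equal Some). ring.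
    - intro q. rewrite hL1, Z.add_0_l, L0l. reflexivity. }
  destruct CTu as [CTu1 CTu2].
  assert (Phi : forall j, CT n (fun x => L O (j * l) (x - j * k1)) (fun x => j * e1 x)).
  { intro j. pattern j. apply Z.peano_ind.
    - split.
      + intro x. rewrite Z.mul_0_l, hL1. ring.
      + intros. ring.
    - intros j0 [H1 H2]. split.
      + intro x. unfold Z.succ.
        replace ((j0 + 1) * l) with (j0 * l + l) by ring.
        replace (x - (j0 + 1) * k1) with ((x - j0 * k1) + - k1) by ring.
        rewrite Hsl.
        rewrite CTu1, H1.
        assert (e1 (x + n * (j0 * e1 x)) = e1 x).
        { apply CTu2. replace (x + n * (j0 * e1 x) - x) with (n * (j0 * e1 x)) by ring.
          apply mod_mul0. }
        rewrite H. ring.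
      + intros x y Hxy. rewrite (CTu2 x y Hxy). reflexivity.
    - intros j0 [H1 H2]. split.
      + intro x. unfold Z.pred.
        assert (E := Hsl ((j0 + -1) * l) (x - (j0 + -1) * k1)).
        replace ((j0 + -1) * l + l) with (j0 * l) in E by ring.
        replace (x - (j0 + -1) * k1 + - k1) with (x - j0 * k1) in E by ring.
        rewrite H1 in E.
       
        rewrite CTu1 in E.
        set (P := L O ((j0 + -1) * l) (x - (j0 + -1) * k1)) in *.
        assert (e1 P = e1 x).
        { apply CTu2. replace (P - x) with (n * (j0 * e1 x - e1 P)) by lia. apply mod_mul0. }
        rewrite H in E. lia.
      + intros x y Hxy. rewrite (CTu2 x y Hxy). reflexivity.
  }
  destruct CTv as [CTv1 CTv2].
  assert (HYf : forall x, word_perm n v x - k2 = x + n * f x).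
  { intro x. rewrite <- HY. apply CTv1. }
  assert (F0 : forall (s : nat) t q, L s t (q + Z.of_nat s * k2) =
                 L s 0 (L O t q + Z.of_nat s * k2)).
  { intro s. apply (shift_lemma n Hn (L O) (L s) (gamma_word u k1 k2 O)
             (gamma_word u k1 k2 s) (Z.of_nat s * k2) 0
             (fun x => L s 0 (x + Z.of_nat s * k2))).
    - apply hstep.
    - apply hstep.
    - intro t. replace t with (t + 0 * l) at 1 by ring. unfold l.
      rewrite (gamma_shift u k1 k2 s O).
      destruct (gamma_word u k1 k2 O t); cbn [option_map]; [|reflexivity].
      apply (f_equal Some). simpl Z.of_nat. ring.
    - intro q. rewrite hL1. reflexivity. }
  assert (Crec : forall (s : nat) x,
     L (S s) 0 (word_perm n u (word_perm n v x - k2 - k1) + Z.of_nat (S s) * k2) =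
     L s 0 (word_perm n u (x - k1) + Z.of_nat s * k2)).
  { intros s x. rewrite <- !L0l. rewrite <- !F0.
    pose proof (hL3 s 0 ((0 + 1) * l) (x + (- (0 + 1) * k1 + Z.of_nat s * k2))
                  ltac:(lia) ltac:(lia)) as E.
    rewrite seg_nil, app_nil_l, wp_rot in E.
    replace (x + (- (0 + 1) * k1 + Z.of_nat s * k2) - (- (0 + 1) * k1 + Z.of_nat s * k2))
      with x in E by ring.
    replace ((0 + 1) * l) with l in E by ring.
    replace (word_perm n v x - k2 - k1 + Z.of_nat (S s) * k2)
      with (word_perm n v x + (- (0 + 1) * k1 + Z.of_nat s * k2)) by lia.
    rewrite E. f_equal. ring. }
  assert (Cs : forall s : nat, CT n (fun x => L s 0 (x + Z.of_nat s * k2))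
                                   (fun x => - Z.of_nat s * f x)).
  { induction s as [|s [IH1 IH2]].
    - split.
      + intro x. simpl Z.of_nat. rewrite Z.mul_0_l, Z.add_0_r, hL1. ring.
      + intros. reflexivity.
    - split.
      + intro z.
        set (x := z - n * (f z + e1 z)).
        assert (hf : f x = f z).
        { apply CTv2. unfold x. replace (z - n * (f z + e1 z) - z) with (n * (- (f z + e1 z))) by ring.
          apply mod_mul0. }
        assert (he : e1 (x + n * f x) = e1 z).
        { apply CTu2. rewrite hf. unfold x.
          replace (z - n * (f z + e1 z) + n * f z - z) with (n * (- e1 z)) by ring.
          apply mod_mul0. }
        assert (Hz : word_perm n u (word_perm n v x - k2 - k1) = z).
        { rewrite HYf, CTu1, he, hf. unfold x. ring. }
        rewrite <- Hz at 1. rewrite Crec, IH1, CTu1.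
        assert (hf2 : f (x + n * e1 x) = f x).
        { apply CTv2. replace (x + n * e1 x - x) with (n * e1 x) by ring. apply mod_mul0. }
        rewrite hf2, hf. unfold x. rewrite Nat2Z.inj_succ.
        assert (e1 (z - n * (f z + e1 z)) = e1 z).
        { apply CTu2. replace (z - n * (f z + e1 z) - z) with (n * (- (f z + e1 z))) by ring.
          apply mod_mul0. }
        rewrite H. ring.
      + intros x y Hxy. rewrite (CTv2 x y Hxy). reflexivity.
  }
  set (r := - i * k1 + Z.of_nat m * k2).
  assert (CTG : CT n (fun x => L m (i * l) (x + r)) (fun x => i * e1 x - Z.of_nat m * f x)).
  { destruct (Phi i) as [P1 P2]. destruct (Cs m) as [C1 C2]. split.
    - intro x. unfold r. replace (x + (- i * k1 + Z.of_nat m * k2))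
                    with ((x - i * k1) + Z.of_nat m * k2) by ring.
      rewrite F0, C1, P1.
      assert (f (x + n * (i * e1 x)) = f x).
      { apply CTv2. replace (x + n * (i * e1 x) - x) with (n * (i * e1 x)) by ring. apply mod_mul0. }
      rewrite H. ring.
    - intros x y Hxy. rewrite (CTu2 x y Hxy), (CTv2 x y Hxy). reflexivity. }
  assert (HGt : forall t q, L m (t + i * l) (q + r) = L m (i * l) (L O t q + r)).
  { apply (shift_lemma n Hn (L O) (fun t => L m (t + i * l)) (gamma_word u k1 k2 O)
             (fun t => gamma_word u k1 k2 m (t + i * l)) r 0
             (fun x => L m (i * l) (x + r))).
    - apply hstep.
    - intros t q. replace (t + 1 + i * l) with ((t + i * l) + 1) by ring. apply hstep.
    - intro t. unfold l. rewrite (gamma_shift u k1 k2 m O).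
      destruct (gamma_word u k1 k2 O t); cbn [option_map]; [|reflexivity].
      apply (f_equal Some). unfold r. simpl Z.of_nat. ring.
    - intro q. rewrite hL1, Z.add_0_l. reflexivity. }
  intros t p s s' Hs Hs'.
  assert (Lab := label_img n Hn _ _ (below (L O t) p) (below (L m (t + i * l)) (p + r)) s CTG).
  assert (Lab' : IsLabel n (below (L m (t + i * l)) (p + r))
                   (fun a => s a + (i * e1 a - Z.of_nat m * f a))).
  { apply Lab; auto.
    - intros b [q [Hq <-]]. exists (q + r). split; [lia|]. apply HGt.
    - intros b [q [Hq <-]]. exists (L O t (q - r)). split.
      + exists (q - r). split; [lia|reflexivity].
      + rewrite <- HGt. f_equal. ring. }
  exists (- i * c1 + Z.of_nat m * c2). intros a Ha.
  rewrite <- (label_uniq _ _ _ _ Lab' Hs' a Ha). rewrite (Hc1 a Ha), (Hc2 a Ha).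
  unfold e1, f. ring.
Qed.
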